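(* Let $r_1 \ge 2$ and $x_1 \ge 1$ be integers, let $d = x_1 + r_1 - 1$, and let $\mathbf{q} = (q_1,\ldots,q_d) \in \mathbb{Z}^d$ be the vector whose first $x_1$ entries equal $r_1$ and whose last $r_1 - 1$ entries equal $1 + r_1 x_1$. Let $\Delta_{(1,\mathbf{q})} = \mathrm{conv}\{\mathbf{e}_1,\ldots,\mathbf{e}_d, -\mathbf{q}\} \subset \mathbb{R}^d$. Define $\mathbf{a}'_{r_1+1} = ((-1)^{x_1}, (-x_1)^{r_1-1})$, $\mathbf{a}'_{r_1+2} = (0^{x_1}, (-1)^{r_1-1})$, $\mathbf{a}'_{r_1+3} = \mathbf{0}$, $\mathbf{a}'_i = (r_1 - i + 1)\mathbf{a}'_{r_1+1} + \mathbf{a}'_{r_1+2}$ for $1 \le i \le r_1$, and $\mathbf{b}'_j = \mathbf{e}_{d-j+1}$ for $1 \le j \le d$, and let $\mathcal{A}' = \{\mathbf{a}'_1,\ldots,\mathbf{a}'_{r_1+3},\mathbf{b}'_1,\ldots,\mathbf{b}'_d\}$. Then $\Delta_{(1,\mathbf{q})} \cap \mathbb{Z}^d = \mathcal{A}'$.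
   Context: $\mathbf{e}_i$ is the $i$-th standard basis vector of $\mathbb{R}^d$. The notation $(c_1^{y_1}, c_2^{y_2})$ denotes the vector consisting of $y_1$ copies of $c_1$ followed by $y_2$ copies of $c_2$. (These simplices are exactly the reflexive, integer-decomposition-property simplices $\Delta_{(1,\mathbf{q})}$ with $\mathbf{q}$ having two distinct parts and smallest part $r_1>1$.) *)

(* Defs.v *)
From HB Require Import structures.
From mathcomp Require Import all_boot all_order all_algebra.
From mathcomp Require Import reals.
Set Implicit Arguments. Unset Strict Implicit. Unset Printing Implicit Defensive.
Import Order.TTheory GRing.Theory Num.Theory.
Local Open Scope ring_scope.

Definition in_conv_hull (R : realType) (d : nat) (S : seq 'rV[R]_d) (x : 'rV[R]_d) : Prop :=
  exists lam : 'I_(size S) -> R,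
    (forall i, 0 <= lam i) /\ \sum_i lam i = 1 /\
    x = \sum_i lam i *: S`_i.

Definition dimd (r1 x1 : nat) : nat := (x1 + r1 - 1)%N.

Definition evec (d : nat) (i : 'I_d) : 'rV[int]_d := delta_mx 0 i.

Definition qvec (r1 x1 : nat) : 'rV[int]_(dimd r1 x1) :=
  \row_(i < dimd r1 x1) if (i < x1)%N then (r1%:Z) else (1 + r1 * x1)%N%:Z.

Definition simplex_vertices (r1 x1 : nat) : seq 'rV[int]_(dimd r1 x1) :=
  [seq evec i | i <- enum 'I_(dimd r1 x1)] ++ [:: - qvec r1 x1].

Definition a_r1p1 (r1 x1 : nat) : 'rV[int]_(dimd r1 x1) :=
  \row_(i < dimd r1 x1) if (i < x1)%N then -1 else - (x1%:Z).

Definition a_r1p2 (r1 x1 : nat) : 'rV[int]_(dimd r1 x1) :=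
  \row_(i < dimd r1 x1) if (i < x1)%N then 0 else -1.

Definition a_r1p3 (r1 x1 : nat) : 'rV[int]_(dimd r1 x1) := 0.

Definition a_i (r1 x1 i : nat) : 'rV[int]_(dimd r1 x1) :=
  ((r1 - i + 1)%N%:Z) *: a_r1p1 r1 x1 + a_r1p2 r1 x1.

(* b'_j = e_{d-j+1} (1-based), i.e. 0-based index d - j, for 1 <= j <= d *)
Definition b_j (r1 x1 j : nat) : 'rV[int]_(dimd r1 x1) :=
  \row_(k < dimd r1 x1) if (nat_of_ord k == dimd r1 x1 - j)%N then 1 else 0.

Definition Aprime (r1 x1 : nat) : seq 'rV[int]_(dimd r1 x1) :=
  [seq a_i r1 x1 i | i <- iota 1 r1] ++
  [:: a_r1p1 r1 x1; a_r1p2 r1 x1; a_r1p3 r1 x1] ++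
  [seq b_j r1 x1 j | j <- iota 1 (dimd r1 x1)].

Definition toR (R : realType) (d : nat) (z : 'rV[int]_d) : 'rV[R]_d :=
  map_mx (fun t : int => t%:~R) z.

(* Main.v *)
Require Import Defs.
From HB Require Import structures.
From mathcomp Require Import all_boot all_order all_algebra.
From mathcomp Require Import reals.
From mathcomp Require Import zify ring lra.
Import Order.TTheory GRing.Theory Num.Theory.
Local Open Scope ring_scope.

Lemma hull_nat (R : realType) d (S : seq 'rV[R]_d) x :
  in_conv_hull S x <-> exists g : nat -> R, (forall i, (i < size S)%N -> 0 <= g i) /\
    \sum_(0 <= i < size S) g i = 1 /\ x = \sum_(0 <= i < size S) g i *: S`_i.
Proof.
split.
- case=> lam [H0 [H1 H2]].
  exists (fun i => if insub i is Some j then lam j else 0).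
  split; first by move=> i hi; case: insubP => [j _ _|].
  split.
    by rewrite big_mkord -H1; apply: eq_bigr => j _; rewrite valK.
  by rewrite big_mkord H2; apply: eq_bigr => j _; rewrite valK.
- case=> g [H0 [H1 H2]]; exists (fun i => g i); split; first by move=> i; apply: H0.
  by split; [rewrite -H1 big_mkord | rewrite H2 big_mkord].
Qed.
Lemma sum_blocks (r1 x1 : nat) (a b : int) : (1 <= r1)%N ->
  \sum_(k < dimd r1 x1) (if (k < x1)%N then a else b) = x1%:Z * a + (r1 - 1)%N%:Z * b.
Proof.
move=> hr.
rewrite -(big_mkord xpredT (fun k => if (k < x1)%N then a else b)).
have hx : (x1 <= dimd r1 x1)%N by rewrite /dimd; lia.
rewrite (big_cat_nat (n := x1)) //.
rewrite (eq_big_nat _ _ (F2 := fun _ => a)); last by move=> i /andP[_ ->].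
rewrite (eq_big_nat (m := x1) (n := dimd r1 x1) _ _ (F2 := fun _ => b)); last first.
  by move=> i /andP[h _]; rewrite ltnNge h.
rewrite !sumr_const_nat subn0 -[a *+ _]mulr_natl -[b *+ _]mulr_natl.
have -> : (dimd r1 x1 - x1 = r1 - 1)%N by rewrite /dimd; lia.
by rewrite !natz.
Qed.
Section S.
Variables (R : realType) (r1 x1 : nat).
Local Notation d := (dimd r1 x1).
Local Notation S := (map (@toR R _) (simplex_vertices r1 x1)).

Lemma size_V : size (simplex_vertices r1 x1) = d.+1.
Proof. by rewrite size_cat size_map size_enum_ord addn1. Qed.

Lemma size_S : size S = d.+1.
Proof. by rewrite size_map size_V. Qed.

Lemma S_entry (i : nat) (k : 'I_d) : (S`_i) 0 k =
  if (i < d)%N then (i == k)%:R else if i == d then - ((qvec r1 x1 0 k)%:~R) else 0.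
Proof.
case: (ltnP i d.+1) => hi; last first.
  rewrite nth_default ?size_S // mxE.
  by rewrite ltnNge (leq_trans _ hi) //= gtn_eqF.
rewrite (nth_map 0) ?size_V //.
rewrite nth_cat size_map size_enum_ord.
case: ifP => hid.
  rewrite (nth_map k) ?size_enum_ord // /toR /evec !mxE /=.
  rewrite -(inj_eq val_inj) /= nth_enum_ord // eq_sym.
  by case: (i == k).
have -> : i = d by apply/eqP; rewrite eqn_leq -ltnS hi leqNgt hid.
by rewrite subnn /= eqxx /toR !mxE rmorphN.
Qed.

Lemma sum_entry (g : nat -> R) (k : 'I_d) :
  \sum_(0 <= i < d.+1) g i * (S`_i) 0 k = g k - g d * (qvec r1 x1 0 k)%:~R.
Proof.
rewrite big_nat_recr //= S_entry ltnn eqxx mulrN; congr (_ - _).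
rewrite (eq_big_nat (m := 0) (n := d) _ _ (F2 := fun i => g i * (i == k)%:R)); last first.
  by move=> i /andP[_ hi]; rewrite S_entry hi.
rewrite (bigD1_seq (nat_of_ord k)) ?mem_index_iota ?iota_uniq //= eqxx mulr1 big1 ?addr0 //.
by move=> i /negbTE ->; rewrite mulr0.
Qed.
End S.

Definition Nz (r1 x1 : nat) : int := r1%:Z * (1 + r1%:Z * x1%:Z).
Definition tt {r1 x1 : nat} (z : 'rV[int]_(dimd r1 x1)) : int := 1 - \sum_(k < dimd r1 x1) z 0 k.
Definition IntCond {r1 x1 : nat} (z : 'rV[int]_(dimd r1 x1)) :=
  0 <= tt z /\ forall k, 0 <= Nz r1 x1 * z 0 k + tt z * qvec r1 x1 0 k.

Lemma qsum (r1 x1 : nat) : (1 <= r1)%N -> \sum_(k < dimd r1 x1) qvec r1 x1 0 k = Nz r1 x1 - 1.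
Proof.
move=> hr; rewrite (eq_bigr (fun k : 'I_(dimd r1 x1) => if (k < x1)%N then r1%:Z else (1 + r1 * x1)%N%:Z)); last by move=> k _; rewrite mxE.
rewrite sum_blocks // /Nz.
have e1 : (r1 - 1)%N%:Z = r1%:Z - 1 by lia.
have eM : (1 + r1 * x1)%N%:Z = 1 + r1%:Z * x1%:Z by lia.
rewrite e1 eM; ring.
Qed.

Lemma Nz_gt0 r1 x1 : (1 <= r1)%N -> 0 < Nz r1 x1.
Proof. move=> hr; rewrite /Nz; nia. Qed.

Lemma hull_iff (R : realType) r1 x1 (z : 'rV[int]_(dimd r1 x1)) : (1 <= r1)%N ->
  in_conv_hull (map (@toR R _) (simplex_vertices r1 x1)) (toR R z) <-> IntCond z.
Proof.
move=> hr; rewrite hull_nat size_S.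
have hN : (0 : R) < (Nz r1 x1)%:~R by rewrite ltr0z Nz_gt0.
have hN0 : (Nz r1 x1)%:~R != 0 :> R by rewrite lt0r_neq0.
have qs := qsum r1 x1 hr.
have hz : \sum_(k < dimd r1 x1) z 0 k = 1 - tt z by rewrite /tt; ring.
split.
- case=> g [H0 [H1 H2]].
  have He k : (z 0 k)%:~R = g k - g (dimd r1 x1) * (qvec r1 x1 0 k)%:~R :> R.
    have h := congr1 (fun M : 'rV[R]_(dimd r1 x1) => M 0 k) H2.
    have e0 : (toR R z) 0 k = (z 0 k)%:~R by rewrite mxE.
    rewrite -e0 h /= summxE.
    by under eq_bigr do rewrite mxE; rewrite sum_entry.
  have Ht : (tt z)%:~R = g (dimd r1 x1) * (Nz r1 x1)%:~R :> R.
    rewrite /tt rmorphB rmorph1 rmorph_sum /=.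
    under eq_bigr do rewrite He.
    rewrite sumrB -mulr_sumr -rmorph_sum qs.
    move: H1; rewrite big_nat_recr //= => H1.
    rewrite (big_mkord xpredT g) in H1.
    have -> : \sum_(i < dimd r1 x1) g i = 1 - g (dimd r1 x1) by rewrite -H1; ring.
    rewrite rmorphB rmorph1; ring.
  split.
    by rewrite -(ler0z R) Ht; apply: mulr_ge0; [apply: H0 | apply: ltW].
  move=> k; rewrite -(ler0z R) rmorphD !rmorphM /= Ht He.
  rewrite [X in 0 <= X](_ : _ = (Nz r1 x1)%:~R * g k); last by ring.
  by apply: mulr_ge0; [apply: ltW | apply: H0; rewrite ltnS ltnW].
- case=> [ht hk].
  exists (fun i => if (i < dimd r1 x1)%N then
     ((odflt 0 (omap (fun k => z 0 k) (insub i)))%:~R +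
      (tt z)%:~R * (odflt 0 (omap (fun k => qvec r1 x1 0 k) (insub i)))%:~R / (Nz r1 x1)%:~R)
     else (tt z)%:~R / (Nz r1 x1)%:~R).
  have Hk (k : 'I_(dimd r1 x1)) : (z 0 k)%:~R + (tt z)%:~R * (qvec r1 x1 0 k)%:~R / (Nz r1 x1)%:~R
     = (Nz r1 x1 * z 0 k + tt z * qvec r1 x1 0 k)%:~R / (Nz r1 x1)%:~R :> R.
    move: hN0; move: (Nz r1 x1) (tt z) (qvec r1 x1 0 k) (z 0 k) => N t q a hN'.
    by rewrite rmorphD !rmorphM /=; field.
  split.
    move=> i hi; case: ifP => hid.
      case: insubP => [k _ hk'|]; last by rewrite hid.
      by rewrite /= Hk; apply: divr_ge0; [rewrite ler0z | apply: ltW].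
    by apply: divr_ge0; [rewrite ler0z | apply: ltW].
  split.
    rewrite big_nat_recr //= ltnn big_mkord.
    under eq_bigr do rewrite ltn_ord valK /=.
    rewrite big_split /= -rmorph_sum hz -mulr_suml -mulr_sumr -rmorph_sum qs.
    move: hN0; move: (tt z) (Nz r1 x1) => t N hN'.
    by rewrite !rmorphB /= !rmorph1; field.
  apply/rowP => k; rewrite /toR mxE summxE.
  under eq_bigr do rewrite mxE.
  rewrite sum_entry ltn_ord valK /= ltnn.
  by move: hN0; move: (Nz r1 x1) => N hN'; field.
Qed.
Lemma classify_int (R X a b t : int) : 2 <= R -> 1 <= X ->
  t = 1 - (X * a + (R - 1) * b) -> 1 <= t ->
  0 <= R * (1 + R * X) * a + t * R -> 0 <= R * (1 + R * X) * b + t * (1 + R * X) ->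
  (- R <= a <= 0 /\ b = X * a - 1) \/ (a = 0 /\ b = 0) \/ (a = -1 /\ b = - X).
Proof.
move=> hR hX ht t1 hA hB.
have RX : 2 <= R * X by nia.
have hRp : 0 < R by lia.
have hMp : 0 < 1 + R * X by lia.
have hA' : 0 <= (1 + R * X) * a + t.
  rewrite -(pmulr_rge0 _ hRp).
  by have -> : R * ((1 + R * X) * a + t) = R * (1 + R * X) * a + t * R by ring.
have hB' : 0 <= R * b + t.
  rewrite -(pmulr_rge0 _ hMp).
  by have -> : (1 + R * X) * (R * b + t) = R * (1 + R * X) * b + t * (1 + R * X) by ring.
have id : R * X * ((1 + R * X) * a + t) + (1 + R * X) * (R - 1) * (R * b + t)
     = R * (1 + R * X) - t.
  by rewrite ht; ring.
set A := (1 + R * X) * a + t in hA' id.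
set B := R * b + t in hB' id.
have eA : A = (1 + R * X) * a + t by [].
have eB : B = R * b + t by [].
clearbody A B.
have h1 : 0 <= R * X * A by apply: mulr_ge0 => //; lia.
have B1 : B <= 1.
  rewrite leNgt; apply/negP => B2.
  have h2 : (1 + R * X) * (R - 1) * 2 <= (1 + R * X) * (R - 1) * B.
    by apply: ler_wpM2l; [apply: mulr_ge0; lia | lia].
  have h3 : R * (1 + R * X) <= (1 + R * X) * (R - 1) * 2.
    have : 0 <= (1 + R * X) * (R - 2) by apply: mulr_ge0; lia.
    move=> h; rewrite -subr_ge0.
    by have -> : (1 + R * X) * (R - 1) * 2 - R * (1 + R * X) = (1 + R * X) * (R - 2) by ring.
  lia.
have [B0 | B1'] : B = 0 \/ B = 1 by lia.
- left.
  have eb : b = X * a - 1 by lia.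
  have eRb : R * b = R * X * a - R by rewrite eb; ring.
  have eA' : A = a + R by rewrite eA; lia.
  have h4 : R * (X * a) < R * 1.
    have : R * X * A = R * (X * a) + R * X * R by rewrite eA'; ring.
    lia.
  rewrite ltr_pM2l // in h4.
  have ha : a <= 0.
    rewrite leNgt; apply/negP => ha.
    have : X * 1 <= X * a by apply: ler_wpM2l; lia.
    lia.
  split; [lia | done].
- right.
  have eb : b = X * a by lia.
  have eRb : R * b = R * X * a by rewrite eb; ring.
  have eA' : A = a + 1 by rewrite eA; lia.
  have h4 : (R * X) * a < (R * X) * 1.
    have : R * X * A = R * X * a + R * X by rewrite eA'; ring.
    lia.
  rewrite ltr_pM2l ?(lt_le_trans _ RX) // in h4.
  have [ea|ea] : a = 0 \/ a = -1 by lia.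
  + by left; rewrite eb ea; split => //; ring.
  + by right; rewrite eb ea; split => //; ring.
Qed.

Lemma classify (r1 x1 : nat) (a b t : int) : (2 <= r1)%N -> (1 <= x1)%N ->
  t = 1 - (x1%:Z * a + (r1 - 1)%N%:Z * b) -> 1 <= t ->
  0 <= Nz r1 x1 * a + t * r1%:Z -> 0 <= Nz r1 x1 * b + t * (1 + r1 * x1)%N%:Z ->
  (exists k : nat, (k <= r1)%N /\ a = - k%:Z /\ b = - (k%:Z * x1%:Z) - 1)
  \/ (a = 0 /\ b = 0) \/ (a = -1 /\ b = - x1%:Z).
Proof.
rewrite /Nz => hr hx ht t1 hA hB.
have e1 : (r1 - 1)%N%:Z = r1%:Z - 1 by lia.
have eM : (1 + r1 * x1)%N%:Z = 1 + r1%:Z * x1%:Z by lia.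
rewrite e1 in ht; rewrite eM in hB.
have hR : 2 <= r1%:Z by lia.
have hX : 1 <= x1%:Z by lia.
case: (classify_int _ _ _ _ _ hR hX ht t1 hA hB) => [[/andP[ha1 ha2] eb] | H]; last by right.
left; exists `|a|%N.
have ea : a = - (`|a|%N)%:Z by lia.
split; first by lia.
split; first by [].
by rewrite eb {1}ea; ring.
Qed.


Definition rowab (r1 x1 : nat) (a b : int) : 'rV[int]_(dimd r1 x1) :=
  \row_(k < dimd r1 x1) if (k < x1)%N then a else b.

Lemma tt_rowab r1 x1 a b : (1 <= r1)%N ->
  tt (rowab r1 x1 a b) = 1 - (x1%:Z * a + (r1 - 1)%N%:Z * b).
Proof.
move=> hr; rewrite /tt; congr (_ - _).
by under eq_bigr do rewrite mxE; rewrite sum_blocks.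
Qed.

Lemma cond_rowab r1 x1 a b : (1 <= r1)%N ->
  let t := 1 - (x1%:Z * a + (r1 - 1)%N%:Z * b) in
  0 <= t -> 0 <= Nz r1 x1 * a + t * r1%:Z ->
  0 <= Nz r1 x1 * b + t * (1 + r1 * x1)%N%:Z -> IntCond (rowab r1 x1 a b).
Proof.
move=> hr t h0 h1 h2; split; rewrite tt_rowab //.
move=> k; rewrite !mxE; by case: ifP.
Qed.

Lemma a_i_rowab r1 x1 i : a_i r1 x1 i =
  rowab r1 x1 (- (r1 - i + 1)%N%:Z) (- ((r1 - i + 1)%N%:Z * x1%:Z) - 1).
Proof.
apply/rowP => k; rewrite !mxE; case: ifP => _; lia.
Qed.

Lemma a3_rowab r1 x1 : a_r1p3 r1 x1 = rowab r1 x1 0 0.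
Proof. by apply/rowP => k; rewrite !mxE; case: ifP. Qed.

Lemma Aprime_cond r1 x1 z : (2 <= r1)%N -> (1 <= x1)%N -> z \in Aprime r1 x1 -> IntCond z.
Proof.
move=> hr hx; have hr1 : (1 <= r1)%N by apply: ltnW.
have e1 : (r1 - 1)%N%:Z = r1%:Z - 1 by lia.
have eM : (1 + r1 * x1)%N%:Z = 1 + r1%:Z * x1%:Z by lia.
rewrite /Aprime mem_cat => /orP[/mapP[i hi ->] | ].
  rewrite mem_iota in hi; rewrite a_i_rowab.
  have : (1 <= r1 - i + 1 <= r1)%N by lia.
  move: (r1 - i + 1)%N => k hk.
  apply: cond_rowab => //; rewrite /Nz e1 ?eM; nia.
rewrite mem_cat => /orP[ | /mapP[j hj ->]].
  rewrite !in_cons in_nil orbF => /or3P[/eqP->|/eqP->|/eqP->].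
  - change (a_r1p1 r1 x1) with (rowab r1 x1 (-1) (- x1%:Z)).
    apply: cond_rowab => //; rewrite /Nz e1 ?eM; nia.
  - change (a_r1p2 r1 x1) with (rowab r1 x1 0 (-1)).
    apply: cond_rowab => //; rewrite /Nz e1 ?eM; nia.
  - rewrite a3_rowab; apply: cond_rowab => //; rewrite /Nz e1 ?eM; nia.
rewrite mem_iota in hj.
have hs : tt (b_j r1 x1 j) = 0.
  rewrite /tt; under eq_bigr do rewrite mxE.
  rewrite -(big_mkord xpredT (fun k => if k == (dimd r1 x1 - j)%N then (1:int) else 0)).
  rewrite (bigD1_seq (dimd r1 x1 - j)%N) ?mem_index_iota ?iota_uniq //=; last by lia.
  rewrite eqxx big1 ?addr0 ?subrr // => i /negbTE ->; done.
split; rewrite hs // => k; rewrite mul0r addr0 mxE; case: ifP => _.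
  by rewrite mulr1; apply: ltW; apply: Nz_gt0.
by rewrite mulr0.
Qed.

Lemma cond_Aprime r1 x1 z : (2 <= r1)%N -> (1 <= x1)%N -> IntCond z -> z \in Aprime r1 x1.
Proof.
move=> hr hx [ht hk]; have hr1 : (1 <= r1)%N by apply: ltnW.
have hN := Nz_gt0 r1 x1 hr1.
have hz : \sum_(k < dimd r1 x1) z 0 k = 1 - tt z by rewrite /tt; ring.
have W : \sum_(k < dimd r1 x1) (Nz r1 x1 * z 0 k + tt z * qvec r1 x1 0 k) = Nz r1 x1 - tt z.
  by rewrite big_split /= -!mulr_sumr hz qsum //; ring.
have Wk (k : 'I_(dimd r1 x1)) : Nz r1 x1 * z 0 k + tt z * qvec r1 x1 0 k <= Nz r1 x1 - tt z.
  rewrite -W (bigD1 k) //= lerDl; apply: sumr_ge0 => i _; exact: hk.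
have [t0 | tn0] := eqVneq (tt z) 0.
-
  have zpos k : 0 <= z 0 k by have := hk k; rewrite t0 mul0r addr0; nia.
  rewrite t0 subr0 in hz.
  case: (pickP (fun k => 0 < z 0 k)) => [k /= zk | nz]; last first.
    exfalso; have : \sum_(k < dimd r1 x1) z 0 k <= 0.
      by apply: sumr_le0 => i _; have := nz i; rewrite /= ltNge => /negbFE.
    by rewrite hz.
  move: hz; rewrite (bigD1 k) //= => hz.
  have hr0 : 0 <= \sum_(i < dimd r1 x1 | i != k) z 0 i by apply: sumr_ge0.
  have zk1 : z 0 k = 1.
    apply/eqP; rewrite eq_le; apply/andP; split; last by lia.
    by rewrite -hz lerDl.
  have hrest : \sum_(i < dimd r1 x1 | i != k) z 0 i = 0.
    by apply: (@addrI _ 1); rewrite addr0 -{1}zk1.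
  have zo := psumr_eq0P (fun i _ => zpos i) hrest.
  rewrite /Aprime !mem_cat; apply/orP; right; apply/orP; right.
  apply/mapP; exists (dimd r1 x1 - k)%N.
    by rewrite mem_iota; have := ltn_ord k; lia.
  apply/rowP => i; rewrite mxE subKn; last by apply: ltnW.
  case: (eqVneq i k) => [->|nik]; first by rewrite eqxx zk1.
  rewrite ifN; first exact: zo.
  exact: nik.
-
  have t1 : 1 <= tt z by lia.
  have hd0 : (0 < dimd r1 x1)%N by rewrite /dimd; lia.
  have hd1 : (x1 < dimd r1 x1)%N by rewrite /dimd; lia.
  set k0 : 'I_(dimd r1 x1) := Ordinal hd0.
  set k1 : 'I_(dimd r1 x1) := Ordinal hd1.
  have same (k k' : 'I_(dimd r1 x1)) : qvec r1 x1 0 k = qvec r1 x1 0 k' -> z 0 k = z 0 k'.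
    move=> hq; have := Wk k; have := Wk k'; have := hk k; have := hk k'.
    rewrite hq; set N := Nz r1 x1; set q := qvec r1 x1 0 k'; set t := tt z => h1 h2 h3 h4.
    have : N * (z 0 k - z 0 k') < N by lia.
    have : - N < N * (z 0 k - z 0 k') by lia.
    nia.
  have ez : z = rowab r1 x1 (z 0 k0) (z 0 k1).
    apply/rowP => k; rewrite mxE; case: ifP => hkx; apply: same; rewrite !mxE /= hkx //.
      by rewrite hx.
    by rewrite ltnn.
  have := hk k0; have := hk k1.
  rewrite !mxE /= ltnn (leq_trans _ hx) //.
  have := tt_rowab r1 x1 (z 0 k0) (z 0 k1) hr1; rewrite -ez => tE h1 h0.
  case: (classify _ _ _ _ _ hr hx tE t1 h0 h1) => [[k [hk' [ea eb]]] | [[ea eb] | [ea eb]]];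
    rewrite ez ea eb /Aprime !mem_cat; apply/orP.
  + have [k0' | kpos] := eqVneq k 0%N.
      right; apply/orP; left; rewrite !in_cons; apply/orP; right; apply/orP; left.
      by apply/eqP; apply/rowP => i; rewrite !mxE k0' /=; case: ifP.
    left; apply/mapP; exists (r1 - k + 1)%N; first by rewrite mem_iota; lia.
    rewrite a_i_rowab.
    have -> : (r1 - (r1 - k + 1) + 1)%N = k by lia.
    done.
  + right; apply/orP; left; rewrite !in_cons; apply/orP; right; apply/orP; right.
    by rewrite a3_rowab eqxx.
  + right; apply/orP; left; rewrite !in_cons; apply/orP; left.
    by apply/eqP; apply/rowP => i; rewrite !mxE.
Qed.

Theorem theorem1p4 (R : realType) (r1 x1 : nat) :
  (2 <= r1)%N -> (1 <= x1)%N ->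
  forall z : 'rV[int]_(dimd r1 x1),
    in_conv_hull (map (@toR R _) (simplex_vertices r1 x1)) (toR R z)
    <-> z \in Aprime r1 x1.
Proof.
move=> hr hx z; rewrite hull_iff; last exact: ltnW.
split; [exact: cond_Aprime | exact: Aprime_cond].
Qed.
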